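(* Let $p,q,r\in\mathbb{Z}_{\ge 0}$ with $p+q>0$, $p+r>1$, $q+r>1$ and $p+q+r>2$. Then $$R(p,q,r)=\sum_{a=0}^{p-1}\binom{q+a-1}{a}\,\zeta(\overline{r+q+a},\overline{p-a})+\sum_{b=0}^{q-1}\binom{p+b-1}{b}\,\zeta(r+p+b,\overline{q-b}),$$ $$S(p,q,r)=\sum_{a=0}^{p-1}\binom{q+a-1}{a}\,\zeta(\overline{r+q+a},p-a)+\sum_{b=0}^{q-1}\binom{p+b-1}{b}\,\zeta(\overline{r+p+b},q-b).$$
   Context: Define $$R(p,q,r):=\sum_{m,n=1}^\infty\frac{(-1)^n}{m^p n^q (m+n)^r},\qquad S(p,q,r):=\sum_{m,n=1}^\infty\frac{(-1)^{m+n}}{m^p n^q (m+n)^r}.$$ For positive integers $s,t$ define the alternating double zeta values $$\zeta(\overline{s},\overline{t}):=\sum_{m>n\ge1}\frac{(-1)^{m+n}}{m^s n^t},\quad \zeta(\overline{s},t):=\sum_{m>n\ge1}\frac{(-1)^{m}}{m^s n^t},\quad \zeta(s,\overline{t}):=\sum_{m>n\ge1}\frac{(-1)^{n}}{m^s n^t}.$$ Empty sums are $0$; $\binom{-1}{0}=1$. *)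

(* Defs.v *)
From Stdlib Require Import Reals ClassicalEpsilon.
Open Scope R_scope.

Fixpoint sum1 (f : nat -> R) (N : nat) : R :=
  match N with O => 0 | S N' => sum1 f N' + f N end.

Fixpoint sum0 (f : nat -> R) (n : nat) : R :=
  match n with O => 0 | S n' => sum0 f n' + f n' end.

Fixpoint binom (n k : nat) : nat :=
  match n, k with
  | _, O => 1
  | O, S _ => 0
  | S n', S k' => (binom n' k' + binom n' k)%nat
  end.

(* limit of a real sequence (chosen classically; meaningful when it converges) *)
Definition lim (u : nat -> R) : R :=
  epsilon (inhabits 0) (fun l => Un_cv u l).

Definition R_partial (p q r : nat) (N : nat) : R :=
  sum1 (fun m => sum1 (fun n =>
    (-1) ^ n / (INR m ^ p * INR n ^ q * INR (m + n) ^ r)) N) N.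

Definition S_partial (p q r : nat) (N : nat) : R :=
  sum1 (fun m => sum1 (fun n =>
    (-1) ^ (m + n) / (INR m ^ p * INR n ^ q * INR (m + n) ^ r)) N) N.

Definition zeta_bb_partial (s t : nat) (N : nat) : R :=
  sum1 (fun m => sum1 (fun n => (-1) ^ (m + n) / (INR m ^ s * INR n ^ t)) (m - 1)) N.
Definition zeta_b_partial (s t : nat) (N : nat) : R :=
  sum1 (fun m => sum1 (fun n => (-1) ^ m / (INR m ^ s * INR n ^ t)) (m - 1)) N.
Definition zeta__b_partial (s t : nat) (N : nat) : R :=
  sum1 (fun m => sum1 (fun n => (-1) ^ n / (INR m ^ s * INR n ^ t)) (m - 1)) N.

Definition zeta_bb (s t : nat) : R := lim (zeta_bb_partial s t).
Definition zeta_b_ (s t : nat) : R := lim (zeta_b_partial s t).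
Definition zeta__b (s t : nat) : R := lim (zeta__b_partial s t).

(* Main.v *)
Require Import Defs.
From Stdlib Require Import Reals Lra Lia ClassicalEpsilon.
Open Scope R_scope.

Lemma sum1_ext f g N : (forall k, (1 <= k <= N)%nat -> f k = g k) -> sum1 f N = sum1 g N.
Proof. induction N; simpl; intros H; auto. rewrite IHN by (intros; apply H; lia). rewrite H by lia. auto. Qed.

Lemma sum0_ext f g n : (forall k, (k < n)%nat -> f k = g k) -> sum0 f n = sum0 g n.
Proof. induction n; simpl; intros H; auto. rewrite IHn by (intros; apply H; lia). rewrite H by lia. auto. Qed.

Lemma sum1_plus f g N : sum1 (fun k => f k + g k) N = sum1 f N + sum1 g N.
Proof. induction N; simpl; [ring|rewrite IHN; ring]. Qed.
Lemma sum1_minus f g N : sum1 (fun k => f k - g k) N = sum1 f N - sum1 g N.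
Proof. induction N; simpl; [ring|rewrite IHN; ring]. Qed.
Lemma sum1_scal c f N : sum1 (fun k => c * f k) N = c * sum1 f N.
Proof. induction N; simpl; [ring|rewrite IHN; ring]. Qed.
Lemma sum0_plus f g N : sum0 (fun k => f k + g k) N = sum0 f N + sum0 g N.
Proof. induction N; simpl; [ring|rewrite IHN; ring]. Qed.
Lemma sum0_scal c f N : sum0 (fun k => c * f k) N = c * sum0 f N.
Proof. induction N; simpl; [ring|rewrite IHN; ring]. Qed.
Lemma sum1_sum0 (F : nat -> nat -> R) N n :
  sum1 (fun k => sum0 (fun a => F a k) n) N = sum0 (fun a => sum1 (F a) N) n.
Proof.
  induction N; simpl.
  - induction n; simpl; [auto| rewrite <- IHn; ring].
  - rewrite IHN. rewrite <- sum0_plus. reflexivity.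
Qed.
Lemma sum1_head f N : sum1 f (S N) = f 1%nat + sum1 (fun k => f (S k)) N.
Proof. induction N; simpl in *; [ring| rewrite IHN; ring]. Qed.
Lemma sum0_head f n : sum0 f (S n) = f O + sum0 (fun k => f (S k)) n.
Proof. induction n; simpl in *; [ring| rewrite IHn; ring]. Qed.
Lemma sum1_reflect g K : sum1 g K = sum1 (fun k => g (K + 1 - k)%nat) K.
Proof.
  induction K; [reflexivity|].
  rewrite (sum1_head (fun k => g (S K + 1 - k)%nat)). replace (S K + 1 - 1)%nat with (S K) by lia.
  change (sum1 g (S K)) with (sum1 g K + g (S K)).
  rewrite IHK. rewrite Rplus_comm. f_equal.
Qed.
Lemma sum1_abs f N : Rabs (sum1 f N) <= sum1 (fun k => Rabs (f k)) N.
Proof. induction N; simpl. rewrite Rabs_R0; lra.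
  eapply Rle_trans; [apply Rabs_triang|lra]. Qed.
Lemma sum1_le f g N : (forall k, (1 <= k <= N)%nat -> f k <= g k) -> sum1 f N <= sum1 g N.
Proof. induction N; simpl; intros H; [lra|]. assert (f (S N) <= g (S N)) by (apply H; lia).
  assert (sum1 f N <= sum1 g N) by (apply IHN; intros; apply H; lia). lra. Qed.
Lemma sum0_le f g N : (forall k, (k < N)%nat -> f k <= g k) -> sum0 f N <= sum0 g N.
Proof. induction N; simpl; intros H; [lra|]. assert (f N <= g N) by (apply H; lia).
  assert (sum0 f N <= sum0 g N) by (apply IHN; intros; apply H; lia). lra. Qed.
Lemma sum1_nonneg f N : (forall k, (1 <= k <= N)%nat -> 0 <= f k) -> 0 <= sum1 f N.
Proof. intros H. replace 0 with (sum1 (fun _ => 0) N). apply sum1_le; auto.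
  clear H; induction N; simpl; auto; rewrite IHN; ring. Qed.
Lemma sum1_mono f a b : (forall k, (1 <= k <= b)%nat -> 0 <= f k) -> (a <= b)%nat -> sum1 f a <= sum1 f b.
Proof. intros H Hab. induction b.
  - replace a with O by lia. lra.
  - destruct (Nat.eq_dec a (S b)). subst; lra.
    simpl. assert (sum1 f a <= sum1 f b) by (apply IHb; [intros; apply H; lia| lia]).
    assert (0 <= f (S b)) by (apply H; lia). lra. Qed.
Lemma sum1_diff_abs f a b : (a <= b)%nat ->
  Rabs (sum1 f b - sum1 f a) <= sum1 (fun k => Rabs (f k)) b - sum1 (fun k => Rabs (f k)) a.
Proof. intros Hab. induction b.
  - replace a with O by lia. simpl. rewrite Rminus_diag, Rabs_R0. lra.
  - destruct (Nat.eq_dec a (S b)). subst; rewrite !Rminus_diag, Rabs_R0; lra.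
    simpl. specialize (IHb ltac:(lia)).
    replace (sum1 f b + f (S b) - sum1 f a) with ((sum1 f b - sum1 f a) + f (S b)) by ring.
    eapply Rle_trans; [apply Rabs_triang|lra]. Qed.

Lemma conv_abs_bound (x : nat -> R) (B : R) :
  (forall N, sum1 (fun k => Rabs (x k)) N <= B) -> exists l, Un_cv (sum1 x) l.
Proof.
  intros HB.
  set (A := sum1 (fun k => Rabs (x k))).
  assert (HA : {l | Un_cv A l}).
  { apply growing_cv.
    - intro n. unfold A. simpl. pose proof (Rabs_pos (x (S n))). lra.
    - exists B. intros y [i ->]. apply HB. }
  destruct HA as [lA HA].
  assert (HA2 := CV_Cauchy A (exist _ lA HA)). clear HA. rename HA2 into HA.
  assert (HC : Cauchy_crit (sum1 x)).
  { intros eps Heps. destruct (HA eps Heps) as [N HN]. exists N. intros n m Hn Hm.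
    specialize (HN n m Hn Hm). unfold Rdist in *.
    destruct (Compare_dec.le_lt_dec m n).
    - eapply Rle_lt_trans; [apply sum1_diff_abs; auto|].
      unfold A in HN. eapply Rle_lt_trans; [apply Rle_abs|exact HN].
    - rewrite Rabs_minus_sym. rewrite Rabs_minus_sym in HN.
      eapply Rle_lt_trans; [apply sum1_diff_abs; lia|].
      unfold A in HN. eapply Rle_lt_trans; [apply Rle_abs|exact HN]. }
  destruct (R_complete _ HC) as [l Hl]. exists l. exact Hl.
Qed.

Lemma lim_spec u l : Un_cv u l -> lim u = l.
Proof.
  intros H. unfold lim.
  assert (E : exists l, Un_cv u l) by (exists l; auto).
  pose proof (epsilon_spec (inhabits 0) (fun l => Un_cv u l) E) as H2.
  eapply UL_sequence; eauto.
Qed.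

Lemma cv_const c : Un_cv (fun _ => c) c.
Proof. intros eps He. exists O. intros. unfold Rdist. rewrite Rminus_diag, Rabs_R0. lra. Qed.

Lemma sum0_cv (c : nat -> R) (u : nat -> nat -> R) (l : nat -> R) n :
  (forall a, (a < n)%nat -> Un_cv (u a) (l a)) ->
  Un_cv (fun N => sum0 (fun a => c a * u a N) n) (sum0 (fun a => c a * l a) n).
Proof.
  induction n; intros H; simpl.
  - apply cv_const.
  - apply CV_plus. apply IHn; intros; apply H; lia.
    apply CV_mult. apply cv_const. apply H; lia.
Qed.

Lemma cv_squeeze0 u v : (forall N, Rabs (u N) <= v N) -> Un_cv v 0 -> Un_cv u 0.
Proof.
  intros H Hv eps He. destruct (Hv eps He) as [N HN]. exists N. intros n Hn.
  specialize (HN n Hn). unfold Rdist in *. rewrite Rminus_0_r in *.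
  pose proof (H n). pose proof (Rle_abs (v n)). lra.
Qed.

Lemma cv_double_diff A l : Un_cv A l -> Un_cv (fun N => A (2 * N)%nat - A N) 0.
Proof.
  intros H eps He. destruct (H (eps/2) ltac:(lra)) as [N HN]. exists N. intros n Hn.
  pose proof (HN n Hn). pose proof (HN (2*n)%nat ltac:(lia)). unfold Rdist in *.
  rewrite Rminus_0_r. replace (A (2*n)%nat - A n) with ((A (2*n)%nat - l) - (A n - l)) by ring.
  eapply Rle_lt_trans; [apply Rabs_triang|]. rewrite Rabs_Ropp. lra.
Qed.

Lemma sum1_S f N : sum1 f (S N) = sum1 f N + f (S N).
Proof. reflexivity. Qed.
Definition H (N : nat) : R := sum1 (fun k => / INR k) N.

Lemma H_nonneg N : 0 <= H N.
Proof. unfold H. apply sum1_nonneg. intros k Hk. left. apply Rinv_0_lt_compat. apply lt_0_INR; lia. Qed.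

Lemma H_mono a b : (a <= b)%nat -> H a <= H b.
Proof. intros. unfold H. apply sum1_mono; auto. intros k Hk. left. apply Rinv_0_lt_compat. apply lt_0_INR; lia. Qed.

Lemma H_step_ineq k h : 1 <= k -> 0 <= h ->
  h / k ^ 2 <= 2 * ((1 + h) / k - (1 + (h + / (k+1))) / (k + 1)).
Proof.
  intros Hk Hh.
  assert (E : 2 * ((1 + h) / k - (1 + (h + / (k+1))) / (k + 1)) - h / k ^ 2
     = (2*k + h*k^2 - h) / (k^2 * (k+1)^2)) by (field; lra).
  assert (0 <= (2*k + h*k^2 - h) / (k^2 * (k+1)^2)).
  { assert (0 <= h*(k*k-1)) by (apply Rmult_le_pos; nra). apply Rmult_le_pos. simpl; nra. left. apply Rinv_0_lt_compat. simpl; nra. }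
  lra.
Qed.

Lemma sumH_bound N : sum1 (fun k => H k / INR k ^ 2) N <= 4.
Proof.
  assert (forall N, sum1 (fun k => H k / INR k ^ 2) N + 2 * ((1 + H (S N)) / INR (S N)) <= 4).
  { induction N0.
    - simpl. unfold H. simpl. lra.
    - rewrite sum1_S. pose proof (H_step_ineq (INR (S N0)) (H (S N0))).
      assert (1 <= INR (S N0)) by (apply (le_INR 1); lia).
      specialize (H0 H1 (H_nonneg _)).
      replace (H (S (S N0))) with (H (S N0) + / (INR (S N0) + 1)) by
        (unfold H; change (sum1 (fun k => / INR k) (S (S N0))) with (sum1 (fun k => / INR k) (S N0) + / INR (S (S N0))); rewrite (S_INR (S N0)); reflexivity).
      replace (INR (S (S N0))) with (INR (S N0) + 1) by (rewrite (S_INR (S N0)); reflexivity).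
      lra. }
  specialize (H0 N).
  assert (0 <= (1 + H (S N)) / INR (S N)).
  { apply Rmult_le_pos. pose proof (H_nonneg (S N)); lra. left; apply Rinv_0_lt_compat, lt_0_INR; lia. }
  lra.
Qed.

Lemma H_shift m N : sum1 (fun n => / INR (n + m)) N = H (N + m) - H m.
Proof.
  induction N; simpl. ring. rewrite IHN. unfold H. simpl. ring.
Qed.

Lemma inner_bound m N : (1 <= m)%nat ->
  sum1 (fun n => / (INR n * INR (n + m))) N <= H m / INR m.
Proof.
  intros Hm. assert (0 < INR m) by (apply lt_0_INR; lia).
  transitivity (/ INR m * (H N - (H (N + m) - H m))).
  - rewrite <- H_shift. unfold H at 1. rewrite <- sum1_minus, <- sum1_scal.
    right. apply sum1_ext. intros n Hn. rewrite plus_INR.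
    assert (0 < INR n) by (apply lt_0_INR; lia). field. lra.
  - assert (H N <= H (N + m)) by (apply H_mono; lia).
    unfold Rdiv. rewrite (Rmult_comm (H m)). apply Rmult_le_compat_l. left; apply Rinv_0_lt_compat; lra. lra.
Qed.

Lemma square_bound N :
  sum1 (fun m => sum1 (fun n => 2 / (INR m * INR n * INR (m + n))) N) N <= 8.
Proof.
  transitivity (sum1 (fun m => 2 * (H m / INR m ^ 2)) N).
  - apply sum1_le. intros m Hm.
    assert (0 < INR m) by (apply lt_0_INR; lia).
    transitivity (2 / INR m * sum1 (fun n => / (INR n * INR (n + m))) N).
    + rewrite <- sum1_scal. right. apply sum1_ext. intros n Hn.
      assert (0 < INR n) by (apply lt_0_INR; lia). rewrite !plus_INR. field. lra.
    + replace (2 * (H m / INR m ^ 2)) with (2 / INR m * (H m / INR m)) by (field; lra).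
      apply Rmult_le_compat_l. unfold Rdiv; left; apply Rmult_lt_0_compat; [lra|apply Rinv_0_lt_compat; lra].
      apply inner_bound; lia.
  - rewrite sum1_scal. pose proof (sumH_bound N). lra.
Qed.

Definition T (psi : nat -> nat -> R) N := sum1 (fun M => sum1 (fun k => psi M k) (M - 1)) N.
Definition D (phi : nat -> nat -> R) N := sum1 (fun m => sum1 (phi m) (N - m)) N.

Lemma abs_div_le e A Bv : Rabs e <= 1 -> 0 < Bv -> Bv <= A -> Rabs (e / A) <= / Bv.
Proof.
  intros He HB HA. unfold Rdiv. rewrite Rabs_mult, Rabs_inv, (Rabs_right A) by lra.
  rewrite <- (Rmult_1_l (/ Bv)). apply Rmult_le_compat; auto using Rabs_pos.
  left; apply Rinv_0_lt_compat; lra. apply Rinv_le_contravar; lra.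
Qed.

Lemma zeta_conv (e : nat -> nat -> R) s t :
  (forall M k, Rabs (e M k) <= 1) -> (2 <= s)%nat -> (1 <= t)%nat ->
  exists l, Un_cv (T (fun M k => e M k / (INR M ^ s * INR k ^ t))) l.
Proof.
  intros He Hs Ht. apply (conv_abs_bound _ 4). intros N.
  eapply Rle_trans; [|apply (sumH_bound N)]. apply sum1_le. intros M HM.
  assert (HM1 : 1 <= INR M) by (apply (le_INR 1); lia).
  eapply Rle_trans; [apply sum1_abs|].
  transitivity (sum1 (fun k => / INR M ^ 2 * / INR k) (M - 1)).
  - apply sum1_le. intros k Hk.
    assert (Hk1 : 1 <= INR k) by (apply (le_INR 1); lia).
    rewrite <- Rinv_mult. apply abs_div_le; auto.
    + apply Rmult_lt_0_compat; [apply pow_lt|]; lra.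
    + apply Rmult_le_compat; [apply pow_le; lra|lra| apply Rle_pow; auto |].
      rewrite <- (pow_1 (INR k)) at 1. apply Rle_pow; auto.
  - rewrite sum1_scal. fold (H (M - 1)). unfold Rdiv. rewrite Rmult_comm.
    apply Rmult_le_compat_r. left; apply Rinv_0_lt_compat, pow_lt; lra.
    apply H_mono; lia.
Qed.

Lemma D_step phi N : D phi (S N) = D phi N + sum1 (fun m => phi m (S N - m)%nat) N.
Proof.
  unfold D. rewrite sum1_S. rewrite Nat.sub_diag. simpl (sum1 (phi (S N)) 0). rewrite Rplus_0_r.
  rewrite <- sum1_plus. apply sum1_ext. intros m Hm.
  replace (S N - m)%nat with (S (N - m)) by lia. rewrite sum1_S. reflexivity.
Qed.

Lemma D_T phi N : D phi N = T (fun M k => phi k (M - k)%nat) N.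
Proof.
  induction N. reflexivity.
  rewrite D_step, IHN. unfold T. rewrite sum1_S. f_equal.
  replace (S N - 1)%nat with N by lia. reflexivity.
Qed.

Lemma prod_ge x y p q r :
  1 <= x -> 1 <= y ->
  (0 < p + q)%nat -> (1 < p + r)%nat -> (1 < q + r)%nat -> (2 < p + q + r)%nat ->
  x * y * (x + y) / 2 <= x ^ p * y ^ q * (x + y) ^ r.
Proof.
  intros Hx Hy H1 H2 H3 H4.
  assert (step : forall p0 q0 r0, (p0 <= p)%nat -> (q0 <= q)%nat -> (r0 <= r)%nat ->
            x ^ p0 * y ^ q0 * (x + y) ^ r0 <= x ^ p * y ^ q * (x + y) ^ r).
  { intros. apply Rmult_le_compat; [apply Rmult_le_pos; apply pow_le; lra| apply pow_le; lra| |apply Rle_pow; auto; lra].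
    apply Rmult_le_compat; [apply pow_le; lra| apply pow_le; lra| |]; apply Rle_pow; auto; lra. }
  destruct r as [|[|r]].
  - apply Rle_trans with (x ^ 2 * y ^ 2 * (x + y) ^ 0); [|apply step; lia].
    assert (0 <= (x*y) * (2*(x*y) - x - y)) by (apply Rmult_le_pos; nra). simpl. nra.
  - apply Rle_trans with (x ^ 1 * y ^ 1 * (x + y) ^ 1); [simpl; nra| apply step; lia].
  - destruct p as [|p].
    + apply Rle_trans with (x ^ 0 * y ^ 1 * (x + y) ^ 2); [simpl; nra| apply step; lia].
    + apply Rle_trans with (x ^ 1 * y ^ 0 * (x + y) ^ 2); [simpl; nra| apply step; lia].
Qed.

Lemma term_bound p q r m n sg :
  (0 < p + q)%nat -> (1 < p + r)%nat -> (1 < q + r)%nat -> (2 < p + q + r)%nat ->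
  (1 <= m)%nat -> (1 <= n)%nat -> Rabs sg <= 1 ->
  Rabs (sg / (INR m ^ p * INR n ^ q * INR (m + n) ^ r)) <= 2 / (INR m * INR n * INR (m + n)).
Proof.
  intros H1 H2 H3 H4 Hm Hn Hs.
  assert (Hx : 1 <= INR m) by (apply (le_INR 1); lia).
  assert (Hy : 1 <= INR n) by (apply (le_INR 1); lia).
  replace (2 / (INR m * INR n * INR (m + n))) with (/ (INR m * INR n * INR (m + n) / 2)).
  2:{ rewrite plus_INR. field. nra. }
  apply abs_div_le; auto. rewrite plus_INR. assert (0 < INR m * INR n * (INR m + INR n)) by (apply Rmult_lt_0_compat; nra). lra.
  rewrite plus_INR. apply prod_ge; auto.
Qed.

Lemma binom_lt n k : (n < k)%nat -> binom n k = 0%nat.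
Proof. revert k; induction n; intros k Hk; destruct k; simpl; try lia; auto.
  rewrite !IHn by lia. reflexivity. Qed.
Lemma binom_0 n : binom n 0 = 1%nat.
Proof. destruct n; reflexivity. Qed.
Lemma binom_S n k : binom (S n) (S k) = (binom n k + binom n (S k))%nat.
Proof. reflexivity. Qed.

Lemma sum0_zero f n : (forall k, (k < n)%nat -> f k = 0) -> sum0 f n = 0.
Proof. induction n; simpl; intros H; auto. rewrite IHn, H by (try intros; apply H || idtac; lia). ring.
Qed.

Lemma pf_p0 x y q : 0 < x -> 0 < y -> (1 <= q)%nat ->
  / (x ^ 0 * y ^ q) = sum0 (fun a => INR (binom (q + a - 1) a) / (x ^ (0 - a) * (x + y) ^ (q + a))) 0
              + sum0 (fun b => INR (binom (0 + b - 1) b) / (y ^ (q - b) * (x + y) ^ (0 + b))) q.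
Proof.
  intros Hx Hy Hq. destruct q as [|Q]; [lia|]. simpl (sum0 _ 0). rewrite sum0_head.
  rewrite sum0_zero. 2:{ intros k Hk. replace (0 + S k - 1)%nat with k by lia. rewrite binom_lt by lia. simpl. unfold Rdiv; ring. }
  simpl. replace (Q - 0)%nat with Q by lia. field. split; [apply pow_nonzero|]; lra.
Qed.

Lemma pf_q0 x y p : 0 < x -> 0 < y -> (1 <= p)%nat ->
  / (x ^ p * y ^ 0) = sum0 (fun a => INR (binom (0 + a - 1) a) / (x ^ (p - a) * (x + y) ^ (0 + a))) p
              + sum0 (fun b => INR (binom (p + b - 1) b) / (y ^ (0 - b) * (x + y) ^ (p + b))) 0.
Proof.
  intros Hx Hy Hq. destruct p as [|Q]; [lia|]. simpl (sum0 _ 0). rewrite sum0_head.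
  rewrite sum0_zero. 2:{ intros k Hk. replace (0 + S k - 1)%nat with k by lia. rewrite binom_lt by lia. simpl. unfold Rdiv; ring. }
  simpl. replace (Q - 0)%nat with Q by lia. field. split; [apply pow_nonzero|]; lra.
Qed.

Lemma comb x z P Q : 0 < x -> 0 < z ->
  sum0 (fun a => INR (binom (S Q + a - 1) a) / (x ^ (S P - a) * z ^ (S Q + a))) (S P)
  = / z * (sum0 (fun a => INR (binom (S Q + a - 1) a) / (x ^ (P - a) * z ^ (S Q + a))) P
         + sum0 (fun a => INR (binom (Q + a - 1) a) / (x ^ (S P - a) * z ^ (Q + a))) (S P)).
Proof.
  intros Hx Hz. rewrite !sum0_head.
  rewrite !binom_0, !Nat.add_0_r, !Nat.sub_0_r.
  rewrite Rmult_plus_distr_l, Rmult_plus_distr_l.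
  rewrite <- !sum0_scal. 
  assert (E : sum0 (fun k => INR (binom (S Q + S k - 1) (S k)) / (x ^ (S P - S k) * z ^ (S Q + S k))) P
    = sum0 (fun k => / z * (INR (binom (S Q + k - 1) k) / (x ^ (P - k) * z ^ (S Q + k)))) P
    + sum0 (fun k => / z * (INR (binom (Q + S k - 1) (S k)) / (x ^ (S P - S k) * z ^ (Q + S k)))) P).
  { rewrite <- sum0_plus. apply sum0_ext. intros a Ha.
    replace (S Q + S a - 1)%nat with (S (Q + a)) by lia.
    replace (S Q + a - 1)%nat with (Q + a)%nat by lia.
    replace (Q + S a - 1)%nat with (Q + a)%nat by lia.
    replace (S Q + S a)%nat with (S (S Q + a)) by lia.
    replace (Q + S a)%nat with (S Q + a)%nat by lia.
    replace (S P - S a)%nat with (P - a)%nat by lia.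
    rewrite binom_S, plus_INR. change (z ^ S (S Q + a)) with (z * z ^ (S Q + a)).
    field; repeat split; try apply pow_nonzero; lra. }
  rewrite E. simpl (INR 1). change (z ^ S Q) with (z * z ^ Q).
  replace (S Q - 1)%nat with Q by lia.
  assert (1 / (x ^ S P * (z * z ^ Q)) = / z * (1 / (x ^ S P * z ^ Q))).
  { field; repeat split; try apply pow_nonzero; lra. }
  lra.
Qed.

Lemma pf x y p q : 0 < x -> 0 < y -> (0 < p + q)%nat ->
  / (x ^ p * y ^ q) = sum0 (fun a => INR (binom (q + a - 1) a) / (x ^ (p - a) * (x + y) ^ (q + a))) p
              + sum0 (fun b => INR (binom (p + b - 1) b) / (y ^ (q - b) * (x + y) ^ (p + b))) q.
Proof.
  intros Hx Hy Hpq.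
  assert (Main : forall n p q, (p + q)%nat = S n ->
    / (x ^ p * y ^ q) = sum0 (fun a => INR (binom (q + a - 1) a) / (x ^ (p - a) * (x + y) ^ (q + a))) p
              + sum0 (fun b => INR (binom (p + b - 1) b) / (y ^ (q - b) * (x + y) ^ (p + b))) q).
  { induction n; intros p0 q0 Hn.
    - destruct p0. apply pf_p0; auto; lia. destruct q0. apply pf_q0; auto; lia. lia.
    - destruct p0 as [|P]. apply pf_p0; auto; lia. destruct q0 as [|Q]. apply pf_q0; auto; lia.
      assert (E : / (x ^ S P * y ^ S Q) = / (x + y) * (/ (x ^ P * y ^ S Q) + / (x ^ S P * y ^ Q))).
      { simpl. field; repeat split; try apply pow_nonzero; lra. }
      rewrite E. rewrite (IHn P (S Q)) by lia. rewrite (IHn (S P) Q) by lia.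
      rewrite (comb x (x + y) P Q) by lra.
      rewrite (comb y (x + y) Q P) by lra.
      ring. }
  destruct (p + q)%nat eqn:E; [lia|]. apply (Main n); auto.
Qed.

Lemma Un_cv_ext u v l : (forall N, u N = v N) -> Un_cv v l -> Un_cv u l.
Proof. intros E H eps He. destruct (H eps He) as [N HN]. exists N. intros n Hn. rewrite E. auto. Qed.

Lemma D_ext phi psi N : (forall m n, (1 <= m)%nat -> (1 <= n)%nat -> phi m n = psi m n) -> D phi N = D psi N.
Proof. intros Hx. unfold D. apply sum1_ext. intros m Hm. apply sum1_ext. intros n Hn. apply Hx; lia. Qed.

Lemma T_ext phi psi N : (forall M k, (1 <= k <= M - 1)%nat -> phi M k = psi M k) -> T phi N = T psi N.
Proof. intros Hx. unfold T. apply sum1_ext. intros m Hm. apply sum1_ext. intros n Hn. apply Hx; lia. Qed.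

Lemma D_plus phi psi N : D (fun m n => phi m n + psi m n) N = D phi N + D psi N.
Proof. unfold D. rewrite <- sum1_plus. apply sum1_ext. intros. apply sum1_plus. Qed.

Lemma D_sum0 (c : nat -> R) (F : nat -> nat -> nat -> R) p N :
  D (fun m n => sum0 (fun a => c a * F a m n) p) N = sum0 (fun a => c a * D (F a) N) p.
Proof.
  unfold D. transitivity (sum1 (fun m => sum0 (fun a => c a * sum1 (F a m) (N - m)) p) N).
  - apply sum1_ext. intros m Hm. rewrite (sum1_sum0 (fun a n => c a * F a m n)).
    apply sum0_ext. intros. apply sum1_scal.
  - rewrite (sum1_sum0 (fun a m => c a * sum1 (F a m) (N - m))).
    apply sum0_ext. intros. apply sum1_scal.
Qed.

Lemma T_reflect psi N : T (fun M k => psi M (M - k)%nat) N = T psi N.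
Proof.
  unfold T. apply sum1_ext. intros M HM. rewrite (sum1_reflect (psi M)).
  apply sum1_ext. intros k Hk. f_equal. lia.
Qed.

Lemma main_gen (sg e1 e2 : nat -> nat -> R) p q r :
  (0 < p + q)%nat -> (1 < p + r)%nat -> (1 < q + r)%nat -> (2 < p + q + r)%nat ->
  (forall m n, Rabs (sg m n) <= 1) -> (forall M k, Rabs (e1 M k) <= 1) -> (forall M k, Rabs (e2 M k) <= 1) ->
  (forall m n, (1 <= m)%nat -> (1 <= n)%nat -> sg m n = e1 (m + n)%nat m /\ sg m n = e2 (m + n)%nat n) ->
  Un_cv (fun N => sum1 (fun m => sum1 (fun n => sg m n / (INR m ^ p * INR n ^ q * INR (m + n) ^ r)) N) N)
   (sum0 (fun a => INR (binom (q + a - 1) a) * lim (T (fun M k => e1 M k / (INR M ^ (r + q + a) * INR k ^ (p - a))))) p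
    + sum0 (fun b => INR (binom (p + b - 1) b) * lim (T (fun M k => e2 M k / (INR M ^ (r + p + b) * INR k ^ (q - b))))) q).
Proof.
  intros H1 H2 H3 H4 Hsg He1 He2 Hse.
  set (f := fun m n => sg m n / (INR m ^ p * INR n ^ q * INR (m + n) ^ r)).
  set (G := fun a M k => e1 M k / (INR M ^ (r + q + a) * INR k ^ (p - a))).
  set (Hb := fun b M k => e2 M k / (INR M ^ (r + p + b) * INR k ^ (q - b))).
  assert (Dec : forall N, D f N = sum0 (fun a => INR (binom (q + a - 1) a) * T (G a) N) p
                               + sum0 (fun b => INR (binom (p + b - 1) b) * T (Hb b) N) q).
  { intros N.
    rewrite (D_ext f (fun m n => sum0 (fun a => INR (binom (q + a - 1) a) * (fun a m n => G a (m + n)%nat m) a m n) p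
                   + sum0 (fun b => INR (binom (p + b - 1) b) * (fun b m n => Hb b (m + n)%nat n) b m n) q)).
    2:{ intros m n Hm Hn. destruct (Hse m n Hm Hn) as [E1 E2].
        assert (Hx : 0 < INR m) by (apply lt_0_INR; lia).
        assert (Hy : 0 < INR n) by (apply lt_0_INR; lia).
        unfold f, G, Hb. rewrite plus_INR.
        replace (sg m n / (INR m ^ p * INR n ^ q * (INR m + INR n) ^ r))
          with (sg m n / (INR m + INR n) ^ r * / (INR m ^ p * INR n ^ q)).
        2:{ field. repeat split; try apply pow_nonzero; lra. }
        rewrite (pf (INR m) (INR n) p q Hx Hy H1).
        rewrite Rmult_plus_distr_l, <- !sum0_scal. f_equal.
        - apply sum0_ext. intros a Ha. rewrite <- E1.
          replace (r + q + a)%nat with (r + (q + a))%nat by lia. rewrite !pow_add.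
          field. repeat split; try apply pow_nonzero; lra.
        - apply sum0_ext. intros b Hb'. rewrite <- E2.
          replace (r + p + b)%nat with (r + (p + b))%nat by lia. rewrite !pow_add.
          field. repeat split; try apply pow_nonzero; lra. }
    rewrite D_plus, !D_sum0. f_equal.
    - apply sum0_ext. intros a Ha. f_equal. rewrite D_T. apply T_ext. intros M k Hk.
      simpl. f_equal. lia.
    - apply sum0_ext. intros b Hb'. f_equal. rewrite D_T. rewrite <- (T_reflect (Hb b)). apply T_ext. intros M k Hk.
      simpl. f_equal. lia. }
  assert (HD : Un_cv (D f)
   (sum0 (fun a => INR (binom (q + a - 1) a) * lim (T (G a))) p
    + sum0 (fun b => INR (binom (p + b - 1) b) * lim (T (Hb b))) q)).
  { apply (Un_cv_ext _ _ _ Dec). apply CV_plus.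
    - apply (sum0_cv (fun a => INR (binom (q + a - 1) a)) (fun a => T (G a))). intros a Ha.
      destruct (zeta_conv e1 (r + q + a) (p - a) He1 ltac:(lia) ltac:(lia)) as [l Hl].
      assert (Hl' : Un_cv (T (G a)) l) by exact Hl. rewrite (lim_spec _ l Hl'). exact Hl'.
    - apply (sum0_cv (fun b => INR (binom (p + b - 1) b)) (fun b => T (Hb b))). intros b Hb'.
      destruct (zeta_conv e2 (r + p + b) (q - b) He2 ltac:(lia) ltac:(lia)) as [l Hl].
      assert (Hl' : Un_cv (T (Hb b)) l) by exact Hl. rewrite (lim_spec _ l Hl'). exact Hl'. }
  set (g := fun m n => Rabs (f m n)).
  assert (Hgp : forall m n, 0 <= g m n) by (intros; apply Rabs_pos).
  assert (Hgrow : Un_growing (D g)).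
  { intros N. rewrite D_step. assert (0 <= sum1 (fun m => g m (S N - m)%nat) N) by (apply sum1_nonneg; intros; apply Hgp). lra. }
  assert (Hbd : forall N, D g N <= 8).
  { intros N. eapply Rle_trans; [|apply (square_bound N)].
    unfold D. apply sum1_le. intros m Hm.
    eapply Rle_trans. apply sum1_mono; [intros; auto| apply (Nat.le_sub_l N m)].
    apply sum1_le. intros n Hn. apply term_bound; auto; lia. }
  destruct (growing_cv (D g) Hgrow) as [lg Hlg].
  { exists 8. intros y [i ->]. apply Hbd. }
  pose proof (cv_double_diff _ _ Hlg) as Hdd.
  assert (Htail : Un_cv (fun N => sum1 (fun m => sum1 (f m) N) N - D f N) 0).
  { apply (cv_squeeze0 _ (fun N => D g (2 * N)%nat - D g N)); auto.
    intros N. unfold D at 1. rewrite <- sum1_minus.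
    eapply Rle_trans; [apply sum1_abs|].
    eapply Rle_trans with (sum1 (fun m => sum1 (g m) (2 * N - m) - sum1 (g m) (N - m)) N).
    - apply sum1_le. intros m Hm.
      eapply Rle_trans; [apply sum1_diff_abs; lia|].
      fold (g m). unfold Rminus. apply Rplus_le_compat_r.
      apply sum1_mono; [intros; auto| lia].
    - rewrite sum1_minus. unfold Rminus. apply Rplus_le_compat_r.
      unfold D. apply sum1_mono; [|lia]. intros m Hm. apply sum1_nonneg. intros; auto. }
  eapply Un_cv_ext with (v := fun N => D f N + (sum1 (fun m => sum1 (f m) N) N - D f N)).
  { intros N. unfold f. ring. }
  rewrite <- (Rplus_0_r (_ + _)). apply CV_plus; auto.
Qed.

Lemma sign_lemma m n : (-1) ^ n = (-1) ^ (m + n + m).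
Proof. replace (m + n + m)%nat with (n + 2 * m)%nat by lia. rewrite pow_add, pow_mult.
  replace ((-1) ^ 2) with 1 by ring. rewrite pow1. ring. Qed.

Theorem corollary2 (p q r : nat)
  (Hpq : (0 < p + q)%nat) (Hpr : (1 < p + r)%nat) (Hqr : (1 < q + r)%nat)
  (Hpqr : (2 < p + q + r)%nat) :
  Un_cv (R_partial p q r)
    (sum0 (fun a => INR (binom (q + a - 1) a) * zeta_bb (r + q + a) (p - a)) p
     + sum0 (fun b => INR (binom (p + b - 1) b) * zeta__b (r + p + b) (q - b)) q)
  /\
  Un_cv (S_partial p q r)
    (sum0 (fun a => INR (binom (q + a - 1) a) * zeta_b_ (r + q + a) (p - a)) p
     + sum0 (fun b => INR (binom (p + b - 1) b) * zeta_b_ (r + p + b) (q - b)) q).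
Proof.
  split.
  - exact (main_gen (fun m n => (-1) ^ n) (fun M k => (-1) ^ (M + k)) (fun M k => (-1) ^ k) p q r
      Hpq Hpr Hqr Hpqr (fun m n => Req_le _ _ (pow_1_abs n)) (fun M k => Req_le _ _ (pow_1_abs (M + k)))
      (fun M k => Req_le _ _ (pow_1_abs k))
      (fun m n _ _ => conj (sign_lemma m n) eq_refl)).
  - exact (main_gen (fun m n => (-1) ^ (m + n)) (fun M k => (-1) ^ M) (fun M k => (-1) ^ M) p q r
      Hpq Hpr Hqr Hpqr (fun m n => Req_le _ _ (pow_1_abs (m + n))) (fun M k => Req_le _ _ (pow_1_abs M))
      (fun M k => Req_le _ _ (pow_1_abs M))
      (fun m n _ _ => conj eq_refl eq_refl)).
Qed.
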